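(* Let $R$ be a commutative ring with identity, $S$ a multiplicative subset of $R$, and let $0\rightarrow A\xrightarrow{f} B\xrightarrow{f'} C\rightarrow 0$ be a short $u$-$S$-exact sequence of $R$-modules. Then the following are equivalent: (1) $0\rightarrow A\xrightarrow{f} B\xrightarrow{f'} C\rightarrow 0$ is $u$-$S$-pure; (2) there exists $s\in S$ such that whenever a system of equations $f(a_i)=\sum_{j=1}^m r_{ij}x_j$ $(i=1,\dots,n)$, with $a_i\in A$, $r_{ij}\in R$ and unknowns $x_1,\dots,x_m$, has a solution in $B$, the system $sa_i=\sum_{j=1}^m r_{ij}x_j$ $(i=1,\dots,n)$ has a solution in $A$; (3) there exists $s\in S$ such that for every finitely generated free $R$-module $F$, every finitely generated submodule $K$ of $F$ with inclusion $i:K\to F$, and all $R$-homomorphisms $\alpha:K\to A$, $\beta:F\to B$ with $f\alpha=\beta i$, there exists an $R$-homomorphism $\eta:F\to A$ with $s\alpha=\eta i$; (4) there exists $s\in S$ such that for every finitely presented $R$-module $N$, the induced sequence $0\rightarrow\mathrm{Hom}_R(N,A)\rightarrow \mathrm{Hom}_R(N,B)\rightarrow \mathrm{Hom}_R(N,C)\rightarrow 0$ is $u$-$S$-exact with respect to $s$.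
   Context: A multiplicative subset $S$ of $R$ satisfies $1\in S$ and $s_1s_2\in S$ for $s_1,s_2\in S$. A sequence $X\xrightarrow{u}Y\xrightarrow{v}Z$ is $u$-$S$-exact at $Y$ with respect to $s\in S$ if $s\,\mathrm{Ker}(v)\subseteq\mathrm{Im}(u)$ and $s\,\mathrm{Im}(u)\subseteq\mathrm{Ker}(v)$. A short sequence $0\to X\to Y\to Z\to 0$ is (short) $u$-$S$-exact (with respect to $s$) if it is $u$-$S$-exact at each of $X,Y,Z$ with respect to some (resp. the given) $s\in S$. A short $u$-$S$-exact sequence $0\rightarrow A\rightarrow B\rightarrow C\rightarrow 0$ is called $u$-$S$-pure if for every $R$-module $M$ the induced sequence $0\rightarrow M\otimes_RA\rightarrow M\otimes_RB\rightarrow M\otimes_RC\rightarrow 0$ is $u$-$S$-exact. *)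

(* Defs.v *)
From HB Require Import structures.
From mathcomp Require Import all_boot all_order all_algebra.
Set Implicit Arguments. Unset Strict Implicit. Unset Printing Implicit Defensive.
Import GRing.Theory.
Local Open Scope ring_scope.

Definition mult_subset (R : comPzRingType) (S : {pred R}) : Prop :=
  1 \in S /\ (forall s t, s \in S -> t \in S -> s * t \in S).

Definition uS_exact_at (R : comPzRingType) (s : R) (X Y Z : lmodType R)
  (u : X -> Y) (v : Y -> Z) : Prop :=
  (forall y, v y = 0 -> exists x, u x = s *: y) /\
  (forall x, v (s *: u x) = 0).

(* 0 -> A --f--> B --g--> C -> 0 is u-S-exact w.r.t. s (exactness at A, B, C,
   with the conditions involving the zero maps written out). *)
Definition short_uS_exact_wrt (R : comPzRingType) (s : R) (A B C : lmodType R)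
  (f : A -> B) (g : B -> C) : Prop :=
  (forall a, f a = 0 -> s *: a = 0) /\
  uS_exact_at s f g /\
  (forall c, exists b, g b = s *: c).

(* ---------- Tensor products M (x)_R A ----------
   An element of M (x)_R A is represented by a finite formal sum
   sum_k m_k (x) a_k, i.e. a list of pairs; [tens_eq] is the congruence
   generated by the defining relations of the tensor product
   (bilinearity, balancedness, commutativity of +, zero).  The quotient
   of (seq (M * A), ++) by [tens_eq] is exactly M (x)_R A. *)
Inductive tens_eq (R : comPzRingType) (M A : lmodType R) :
    seq (M * A) -> seq (M * A) -> Prop :=
| te_refl t : tens_eq t t
| te_sym t t' : tens_eq t t' -> tens_eq t' t
| te_trans t1 t2 t3 : tens_eq t1 t2 -> tens_eq t2 t3 -> tens_eq t1 t3
| te_cat t1 t1' t2 t2' : tens_eq t1 t1' -> tens_eq t2 t2' ->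
    tens_eq (t1 ++ t2) (t1' ++ t2')
| te_comm t1 t2 : tens_eq (t1 ++ t2) (t2 ++ t1)
| te_addl (m m' : M) (a : A) : tens_eq [:: (m + m', a)] [:: (m, a); (m', a)]
| te_addr (m : M) (a a' : A) : tens_eq [:: (m, a + a')] [:: (m, a); (m, a')]
| te_bal (r : R) (m : M) (a : A) : tens_eq [:: (r *: m, a)] [:: (m, r *: a)]
| te_zero (a : A) : tens_eq [:: (0 : M, a)] [::].

Definition tens_map (R : comPzRingType) (M A B : lmodType R) (g : A -> B)
  (t : seq (M * A)) : seq (M * B) := map (fun p => (p.1, g p.2)) t.

Definition tens_scale (R : comPzRingType) (M A : lmodType R) (r : R)
  (t : seq (M * A)) : seq (M * A) := map (fun p => (r *: p.1, p.2)) t.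

Definition tens_short_uS_exact_wrt (R : comPzRingType) (s : R)
  (M A B C : lmodType R) (f : A -> B) (g : B -> C) : Prop :=
  (forall u : seq (M * A), tens_eq (tens_map f u) [::] ->
       tens_eq (tens_scale s u) [::]) /\
  (forall t : seq (M * B), tens_eq (tens_map g t) [::] ->
       exists u : seq (M * A), tens_eq (tens_map f u) (tens_scale s t)) /\
  (forall u : seq (M * A),
       tens_eq (tens_map g (tens_scale s (tens_map f u))) [::]) /\
  (forall w : seq (M * C), exists t : seq (M * B),
       tens_eq (tens_map g t) (tens_scale s w)).

Definition uS_pure (R : comPzRingType) (S : {pred R}) (A B C : lmodType R)
  (f : A -> B) (g : B -> C) : Prop :=
  forall M : lmodType R, exists2 s, s \in S & tens_short_uS_exact_wrt s M f g.

Definition fin_generated (R : comPzRingType) (K : lmodType R) : Prop :=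
  exists n (e : 'I_n -> K),
    forall x, exists c : 'I_n -> R, x = \sum_(i < n) c i *: e i.

Definition fg_free (R : comPzRingType) (F : lmodType R) : Prop :=
  exists n (e : 'I_n -> F),
    (forall x, exists c : 'I_n -> R, x = \sum_(i < n) c i *: e i) /\
    (forall c : 'I_n -> R, \sum_(i < n) c i *: e i = 0 -> forall i, c i = 0).

Definition fin_presented (R : comPzRingType) (N : lmodType R) : Prop :=
  exists n (g : 'I_n -> N),
    (forall x, exists c : 'I_n -> R, x = \sum_(i < n) c i *: g i) /\
    exists k (rel : 'I_k -> 'I_n -> R),
      (forall l, \sum_(i < n) rel l i *: g i = 0) /\
      (forall c : 'I_n -> R, \sum_(i < n) c i *: g i = 0 ->
         exists d : 'I_k -> R, forall i, c i = \sum_(l < k) d l * rel l i).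

(* Main.v *)
Require Import Defs.
From HB Require Import structures.
From mathcomp Require Import all_boot all_order all_algebra.
From mathcomp Require Import boolp functions ring.
Import GRing.Theory.
Local Open Scope ring_scope.
Set Implicit Arguments. Unset Strict Implicit. Unset Printing Implicit Defensive.

Section Quot.
Variables (T : choiceType) (e : T -> T -> Prop).
Hypotheses (e_refl : forall x, e x x) (e_sym : forall x y, e x y -> e y x)
  (e_trans : forall x y z, e x y -> e y z -> e x z).

Definition qeb x : pred T := fun y => `[< e x y >].
Lemma qeb_ex x : exists y, qeb x y. Proof. by exists x; apply/asboolP. Qed.
Definition canon x := xchoose (qeb_ex x).
Lemma canonP x : e x (canon x).
Proof. by have /asboolP := xchooseP (qeb_ex x). Qed.
Lemma canon_eq x y : e x y -> canon x = canon y.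
Proof.
move=> exy; apply: eq_xchoose => z; apply/asbool_equiv_eq; split; eauto.
Qed.
Lemma canon_idem x : canon (canon x) == canon x.
Proof. by apply/eqP/esym/canon_eq/canonP. Qed.

Definition qT := {x : T | canon x == x}.
HB.instance Definition _ := [isSub for @sval T (fun x => canon x == x)].
HB.instance Definition _ := [Equality of qT by <:].
HB.instance Definition _ := [Choice of qT by <:].
Definition mkq x : qT := exist _ (canon x) (canon_idem x).
Lemma mkqK (q : qT) : mkq (val q) = q.
Proof. by apply: val_inj => /=; apply/eqP/(valP q). Qed.
Lemma mkq_eqE x y : mkq x = mkq y <-> e x y.
Proof.
split; last by move=> h; apply: val_inj => /=; apply: canon_eq.
move=> /(congr1 val) /= h; apply: e_trans (canonP x) _; rewrite h; exact/e_sym/canonP.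
Qed.
Lemma val_mkq x : e x (val (mkq x)).
Proof. exact: canonP. Qed.
End Quot.

Section Tens.
Variables (R : comPzRingType) (M A : lmodType R).
Local Notation te := (@tens_eq R M A).

Lemma te_r t : te t t. Proof. exact: te_refl. Qed.
Lemma te_s t t' : te t t' -> te t' t. Proof. exact: te_sym. Qed.
Lemma te_t t1 t2 t3 : te t1 t2 -> te t2 t3 -> te t1 t3. Proof. exact: te_trans. Qed.

Lemma te_perm t t' : perm_eq t t' -> te t t'.
Proof.
elim: t t' => [|x t IH] t' pe.
  by case: t' pe => [|y t'] pe; [exact: te_r | have := perm_size pe].
have xt : x \in t' by rewrite -(perm_mem pe) mem_head.
case/splitPr: xt pe => t1 t2 pe.
have pe' : perm_eq t (t1 ++ t2).
  rewrite -(perm_cons x); apply: perm_trans pe _.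
  by rewrite -[x :: t2]cat1s perm_catCA.
apply: te_t (te_cat (te_r [:: x]) (IH _ pe')) _.
rewrite catA -[t1 ++ x :: t2]/(t1 ++ [:: x] ++ t2) catA.
exact: te_cat (te_comm _ _) (te_r _).
Qed.

Definition tneg (t : seq (M * A)) := map (fun p => (- p.1, p.2)) t.

Lemma te_negK t : te (tneg t ++ t) [::].
Proof.
elim: t => [|[m a] t IH] /=; first exact: te_r.
apply: te_t (te_perm (_ : perm_eq _ ([:: (- m, a); (m, a)] ++ (tneg t ++ t)))) _.
  rewrite /= !perm_cons -[tneg t ++ (m, a) :: t]/(tneg t ++ [:: (m,a)] ++ t).
  by rewrite (perm_catCA (tneg t) [:: (m,a)] t).
rewrite -[[::]]/([::] ++ [::]); apply: te_cat IH.
apply: te_t (te_s (te_addl _ _ _)) _; rewrite addNr; exact: te_zero.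
Qed.

Definition Tq := qT te_r.
HB.instance Definition _ := Choice.on Tq.
Definition tmk (t : seq (M * A)) : Tq := mkq te_r te_s te_t t.
Lemma tmkK (q : Tq) : tmk (val q) = q. Proof. exact: mkqK. Qed.
Lemma tmk_eqE t t' : tmk t = tmk t' <-> te t t'. Proof. exact: mkq_eqE. Qed.
Lemma val_tmk t : te t (val (tmk t)). Proof. exact: val_mkq. Qed.

Definition tadd (q q' : Tq) := tmk (val q ++ val q').
Definition tzero := tmk [::].
Definition topp (q : Tq) := tmk (tneg (val q)).

Lemma tmk_cat t t' : tmk (t ++ t') = tadd (tmk t) (tmk t').
Proof. by apply/tmk_eqE; apply: te_cat; apply: val_tmk. Qed.

Lemma taddA : associative tadd.
Proof.
move=> a b c; rewrite -[a]tmkK -[b]tmkK -[c]tmkK -!tmk_cat.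
by rewrite catA.
Qed.
Lemma taddC : commutative tadd.
Proof. by move=> a b; apply/tmk_eqE/te_comm. Qed.
Lemma tadd0 : left_id tzero tadd.
Proof. by move=> a; rewrite -[a]tmkK /tzero -tmk_cat. Qed.
Lemma taddN : left_inverse tzero topp tadd.
Proof.
move=> a; rewrite /tadd /topp /tzero; apply/tmk_eqE.
apply: te_t (te_cat (te_s (val_tmk _)) (te_r _)) _; exact: te_negK.
Qed.

HB.instance Definition _ := GRing.isZmodule.Build Tq taddA taddC tadd0 taddN.

Definition tq (m : M) (a : A) : Tq := tmk [:: (m, a)].

Lemma tmk_nil : tmk [::] = 0. Proof. by []. Qed.
Lemma tmk_cons x t : tmk (x :: t) = tq x.1 x.2 + tmk t.
Proof. by rewrite -[x :: t]/([:: x] ++ t) tmk_cat; case: x. Qed.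
Lemma tmk_catD t t' : tmk (t ++ t') = tmk t + tmk t'. Proof. exact: tmk_cat. Qed.

Lemma tmk_sum t : tmk t = \sum_(p <- t) tq p.1 p.2.
Proof.
elim: t => [|x t IH]; first by rewrite big_nil.
by rewrite tmk_cons big_cons IH.
Qed.

Lemma te_tmk t t' : te t t' <-> tmk t = tmk t'.
Proof. by split => /tmk_eqE. Qed.

Lemma tqDl m m' a : tq (m + m') a = tq m a + tq m' a.
Proof. by rewrite /tq -tmk_catD; apply/tmk_eqE/te_addl. Qed.
Lemma tqDr m a a' : tq m (a + a') = tq m a + tq m a'.
Proof. by rewrite /tq -tmk_catD; apply/tmk_eqE/te_addr. Qed.
Lemma tqZ r m a : tq (r *: m) a = tq m (r *: a).
Proof. by apply/tmk_eqE/te_bal. Qed.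
Lemma tq0l a : tq 0 a = 0.
Proof. by apply/tmk_eqE/te_zero. Qed.
Lemma tq0r m : tq m 0 = 0.
Proof. by rewrite -(scale0r (0 : A)) -tqZ scale0r tq0l. Qed.
Lemma tqNl m a : tq (- m) a = - tq m a.
Proof. by apply/eqP; rewrite -subr_eq0 opprK -tqDl addNr tq0l. Qed.
Lemma tqNr m a : tq m (- a) = - tq m a.
Proof. by apply/eqP; rewrite -subr_eq0 opprK -tqDr addNr tq0r. Qed.
Lemma tqBl m m' a : tq (m - m') a = tq m a - tq m' a.
Proof. by rewrite tqDl tqNl. Qed.
Lemma tqBr m a a' : tq m (a - a') = tq m a - tq m a'.
Proof. by rewrite tqDr tqNr. Qed.
Lemma tq_suml I (r : seq I) (P : pred I) (F : I -> M) a :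
  tq (\sum_(i <- r | P i) F i) a = \sum_(i <- r | P i) tq (F i) a.
Proof. exact: (big_morph (fun m => tq m a) (fun x y => tqDl x y a) (tq0l a)). Qed.
Lemma tq_sumr I (r : seq I) (P : pred I) (F : I -> A) m :
  tq m (\sum_(i <- r | P i) F i) = \sum_(i <- r | P i) tq m (F i).
Proof. exact: (big_morph (fun a => tq m a) (fun x y => tqDr m x y) (tq0r m)). Qed.

Lemma tens_scale_te r t t' : te t t' -> te (tens_scale r t) (tens_scale r t').
Proof.
elim=> {t t'} /=.
- by move=> t; exact: te_r.
- by move=> t t' _ h; exact: te_s.
- by move=> t1 t2 t3 _ h1 _ h2; exact: te_t h1 h2.
- by move=> t1 t1' t2 t2' _ h1 _ h2; rewrite /tens_scale !map_cat; exact: te_cat.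
- by move=> t1 t2; rewrite /tens_scale !map_cat; exact: te_comm.
- by move=> m m' a; rewrite /tens_scale /= scalerDr; exact: te_addl.
- by move=> m a a'; exact: te_addr.
- move=> r' m a; rewrite /tens_scale /= scalerA mulrC -scalerA; exact: te_bal.
- by move=> a; rewrite /tens_scale /= scaler0; exact: te_zero.
Qed.

End Tens.

Section MkLin.
Variables (R : comPzRingType) (U V : lmodType R).
Definition mklin (f : U -> V) (H : forall a x y, f (a *: x + y) = a *: f x + f y)
  : {linear U -> V} := HB.pack f (GRing.isLinear.Build R U V *:%R f H).
Lemma mklinE f H x : @mklin f H x = f x. Proof. by []. Qed.
End MkLin.

Section QMod.
Variables (R : comPzRingType) (V : lmodType R) (P : V -> Prop).
Hypotheses (P0 : P 0) (PD : forall x y, P x -> P y -> P (x + y))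
  (PZ : forall r x, P x -> P (r *: x)).

Lemma PN x : P x -> P (- x). Proof. by move=> h; rewrite -scaleN1r; apply: PZ. Qed.
Lemma PB x y : P x -> P y -> P (x - y). Proof. by move=> hx hy; apply: PD hx (PN hy). Qed.

Definition qe (x y : V) := P (x - y).
Lemma qe_r x : qe x x. Proof. by rewrite /qe subrr. Qed.
Lemma qe_s x y : qe x y -> qe y x.
Proof. by rewrite /qe => h; rewrite -opprB; apply: PN. Qed.
Lemma qe_t x y z : qe x y -> qe y z -> qe x z.
Proof. by rewrite /qe => h1 h2; rewrite -[x](subrK y) -addrA; apply: PD. Qed.

Definition QM : Type := let _ := PD in let _ := PZ in qT qe_r.
HB.instance Definition _ := Choice.on QM.
Definition qmk (x : V) : QM := mkq qe_r qe_s qe_t x.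
Lemma qmkK (q : QM) : qmk (val q) = q. Proof. exact: (@mkqK _ _ qe_r qe_s qe_t q). Qed.
Lemma qmk_eqE x y : qmk x = qmk y <-> P (x - y). Proof. exact: (@mkq_eqE _ _ qe_r qe_s qe_t x y). Qed.
Lemma val_qmk x : P (x - val (qmk x)). Proof. exact: (@val_mkq _ _ qe_r qe_s qe_t x). Qed.

Definition qadd (q q' : QM) := qmk (val q + val q').
Definition qzero := qmk 0.
Definition qopp (q : QM) := qmk (- val q).
Definition qscale r (q : QM) := qmk (r *: val q).

Lemma qmkD x y : qmk (x + y) = qadd (qmk x) (qmk y).
Proof.
apply/qmk_eqE; rewrite opprD addrACA; apply: PD; exact: val_qmk.
Qed.
Lemma qmkN x : qmk (- x) = qopp (qmk x).
Proof. by apply/qmk_eqE; rewrite -opprD; apply/PN/val_qmk. Qed.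
Lemma qmkZ r x : qmk (r *: x) = qscale r (qmk x).
Proof. by apply/qmk_eqE; rewrite -scalerBr; apply/PZ/val_qmk. Qed.

Lemma qaddA : associative qadd.
Proof. by move=> a b c; rewrite -[a]qmkK -[b]qmkK -[c]qmkK -!qmkD addrA. Qed.
Lemma qaddC : commutative qadd.
Proof. by move=> a b; rewrite -[a]qmkK -[b]qmkK -!qmkD addrC. Qed.
Lemma qadd0 : left_id qzero qadd.
Proof. by move=> a; rewrite -[a]qmkK /qzero -!qmkD add0r. Qed.
Lemma qaddN : left_inverse qzero qopp qadd.
Proof. by move=> a; rewrite -[a]qmkK -qmkN -qmkD addNr. Qed.

HB.instance Definition _ := GRing.isZmodule.Build QM qaddA qaddC qadd0 qaddN.

Lemma qscaleA a b (v : QM) : qscale a (qscale b v) = qscale (a * b) v.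
Proof. by rewrite -[v]qmkK -!qmkZ scalerA. Qed.
Lemma qscale1 : left_id 1 qscale.
Proof. by move=> v; rewrite -[v]qmkK -!qmkZ scale1r. Qed.
Lemma qscaleDr : right_distributive qscale +%R.
Proof.
by move=> a u v; rewrite -[u]qmkK -[v]qmkK /GRing.add /= -qmkD -!qmkZ -qmkD scalerDr.
Qed.
Lemma qscaleDl v : {morph qscale^~ v : a b / a + b}.
Proof.
by move=> a b; rewrite -[v]qmkK /GRing.add /= -!qmkZ -qmkD scalerDl.
Qed.

HB.instance Definition _ := GRing.Zmodule_isLmodule.Build R QM
  qscaleA qscale1 qscaleDr qscaleDl.

Lemma qmk_lin a x y : qmk (a *: x + y) = a *: qmk x + qmk y.
Proof. by rewrite qmkD qmkZ. Qed.
Definition qpi : {linear V -> QM} := mklin qmk_lin.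
Lemma qpiE x : qpi x = qmk x. Proof. by []. Qed.
Lemma qpi_eq0 x : qpi x = 0 <-> P x.
Proof. by rewrite qpiE; have := qmk_eqE x 0; rewrite subr0. Qed.
Lemma qpi_eqE x y : qpi x = qpi y <-> P (x - y). Proof. exact: qmk_eqE. Qed.
Lemma qpi_surj (q : QM) : qpi (val q) = q. Proof. exact: qmkK. Qed.

Lemma qlift (W : lmodType R) (g : {linear V -> W}) :
  (forall x, P x -> g x = 0) ->
  exists gb : {linear QM -> W}, forall x, gb (qpi x) = g x.
Proof.
move=> hg.
have key x : g (val (qpi x)) = g x.
  by apply/eqP; rewrite -subr_eq0 -linearB /= hg // -opprB; apply/PN/val_qmk.
have lin a (q q' : QM) : g (val (a *: q + q')) = a *: g (val q) + g (val q').
  have -> : a *: q + q' = qpi (a *: val q + val q') by rewrite linearP !qpi_surj.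
  by rewrite key linearP.
by exists (mklin lin) => x; rewrite mklinE key.
Qed.

End QMod.

Section FunHelp.
Variables (T : Type) (V : nmodType).
Lemma fsumE I (r : seq I) (P : pred I) (F : I -> T -> V) x :
  (\sum_(i <- r | P i) F i) x = \sum_(i <- r | P i) F i x.
Proof. by rewrite fct_sumE. Qed.
Lemma faddE (f g : T -> V) x : (f + g) x = f x + g x. Proof. by []. Qed.
Lemma f0E x : (0 : T -> V) x = 0. Proof. by []. Qed.
End FunHelp.
Lemma fscaleE (R : pzRingType) (V : lmodType R) (T : Type) a (f : T -> V) x :
  (a *: f) x = a *: f x. Proof. by []. Qed.
Lemma foppE (T : Type) (V : zmodType) (f : T -> V) x : (- f) x = - f x.
Proof. by []. Qed.

Section Comb.
Variables (R : comPzRingType) (V : lmodType R).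
Lemma sum_comb p n (c : 'I_p -> R) (r : 'I_p -> 'I_n -> R) (v : 'I_n -> V) :
  \sum_(q < p) c q *: \sum_(j < n) r q j *: v j =
  \sum_(j < n) (\sum_(q < p) c q * r q j) *: v j.
Proof.
under eq_bigr do rewrite scaler_sumr.
rewrite exchange_big /=; apply: eq_bigr => j _.
by rewrite scaler_suml; apply: eq_bigr => q _; rewrite scalerA.
Qed.

Lemma sum_delta n (F : 'I_n -> V) i0 :
  \sum_(i < n) (if i == i0 then F i else 0) = F i0.
Proof.
rewrite (bigD1 i0) //= eqxx big1 ?addr0 // => i /negbTE ->; done.
Qed.
Lemma sum_delta' n (F : 'I_n -> V) i0 :
  \sum_(i < n) (if i0 == i then F i else 0) = F i0.
Proof. by rewrite -(sum_delta F i0); apply: eq_bigr => i _; rewrite eq_sym. Qed.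
End Comb.

Definition delta (R : pzRingType) n (i : 'I_n) : 'I_n -> R^o :=
  fun l => if i == l then 1 else 0.

Section Delta.
Variable (R : comPzRingType).
Lemma delta_span n (phi : 'I_n -> R^o) : phi = \sum_(j < n) phi j *: delta R j.
Proof.
apply: funext => k; rewrite fsumE -[LHS](sum_delta (fun j => phi j) k).
apply: eq_bigr => j _; rewrite fscaleE /delta.
by case: (j == k); rewrite /GRing.scale /= ?mulr1 ?mulr0.
Qed.
Lemma delta_indep n (c : 'I_n -> R) :
  \sum_(j < n) c j *: (delta R j) = 0 -> forall i, c i = 0.
Proof. by move=> h i; rewrite (delta_span c) h. Qed.
End Delta.

Section FP.
Variables (R : comPzRingType) (N W : lmodType R) (n : nat) (gam : 'I_n -> N)
  (k : nat) (rel : 'I_k -> 'I_n -> R).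
Hypotheses (span : forall x, exists c : 'I_n -> R, x = \sum_(i < n) c i *: gam i)
  (relOK : forall c : 'I_n -> R, \sum_(i < n) c i *: gam i = 0 ->
         exists d : 'I_k -> R, forall i, c i = \sum_(l < k) d l * rel l i).

Lemma fp_lift (z : 'I_n -> W) :
  (forall l, \sum_(i < n) rel l i *: z i = 0) ->
  exists h : {linear N -> W}, forall c, h (\sum_(i < n) c i *: gam i) = \sum_(i < n) c i *: z i.
Proof.
move=> hz.
pose coef x := projT1 (cid (span x)).
have coefP x : x = \sum_(i < n) coef x i *: gam i := projT2 (cid (span x)).
have wd c c' : \sum_(i < n) c i *: gam i = \sum_(i < n) c' i *: gam i ->
    \sum_(i < n) c i *: z i = \sum_(i < n) c' i *: z i.
  move=> e; apply/eqP; rewrite -subr_eq0 -sumrB.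
  have [d hd] : exists d : 'I_k -> R, forall i, c i - c' i = \sum_(l < k) d l * rel l i.
    apply: relOK.
    under eq_bigr do rewrite scalerBl.
    by rewrite sumrB e subrr.
  under eq_bigr do rewrite -scalerBl hd.
  rewrite -(sum_comb d rel z) big1 // => l _; by rewrite hz scaler0.
pose h x := \sum_(i < n) coef x i *: z i.
have hlin a x y : h (a *: x + y) = a *: h x + h y.
  rewrite /h (wd _ (fun i => a * coef x i + coef y i)).
    by rewrite scaler_sumr -big_split /=; apply: eq_bigr => i _; rewrite scalerDl scalerA.
  rewrite -coefP {1}(coefP x) {1}(coefP y) scaler_sumr -big_split /=.
  by apply: eq_bigr => i _; rewrite scalerDl scalerA.
exists (mklin hlin) => c; rewrite mklinE /h; apply: wd; by rewrite -coefP.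
Qed.
End FP.

Lemma fg_free_lift (R : comPzRingType) (F W : lmodType R) (n : nat) (e : 'I_n -> F) :
  (forall x, exists c : 'I_n -> R, x = \sum_(i < n) c i *: e i) ->
  (forall c : 'I_n -> R, \sum_(i < n) c i *: e i = 0 -> forall i, c i = 0) ->
  forall z : 'I_n -> W,
  exists h : {linear F -> W}, forall c, h (\sum_(i < n) c i *: e i) = \sum_(i < n) c i *: z i.
Proof.
move=> sp ind z.
have := @fp_lift R F W n e 0 (fun _ _ => 0) sp _ z.
apply.
- move=> c /ind h0; exists (fun _ => 0) => i; by rewrite h0 big_ord0.
- by case.
Qed.

Section Combl.
Variables (R : comPzRingType) (W : lmodType R) (n : nat) (v : 'I_n -> W).
Lemma combl_lin a (x y : 'I_n -> R^o) :
  \sum_(i < n) (a *: x + y) i *: v i =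
  a *: \sum_(i < n) x i *: v i + \sum_(i < n) y i *: v i.
Proof.
rewrite scaler_sumr -big_split; apply: eq_bigr => i _.
by rewrite faddE fscaleE scalerDl scalerA.
Qed.
Definition combl : {linear ('I_n -> R^o) -> W} := mklin combl_lin.
Lemma comblE c : combl c = \sum_(i < n) c i *: v i. Proof. by []. Qed.
End Combl.

Lemma combl_delta (R : comPzRingType) (W : lmodType R) n (v : 'I_n -> W) i :
  combl v (delta R i) = v i.
Proof.
rewrite comblE -[RHS](sum_delta' v i); apply: eq_bigr => j _; rewrite /delta.
by case: (i == j); rewrite ?scale1r ?scale0r.
Qed.

Lemma sum_deltaZ (R : comPzRingType) (W : lmodType R) n (v : 'I_n -> W) (j : 'I_n) :
  \sum_(i < n) (delta R j i : R) *: v i = v j.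
Proof.
rewrite -[RHS](sum_delta' v j); apply: eq_bigr => i _; rewrite /delta.
by case: (j == i); rewrite ?scale1r ?scale0r.
Qed.

Section Main.
Variables (R : comPzRingType) (S : {pred R}) (hS : mult_subset S)
  (A B C : lmodType R) (f : {linear A -> B}) (f' : {linear B -> C})
  (s0 : R) (s0S : s0 \in S) (hex : short_uS_exact_wrt s0 f f').

Lemma E1 a : f a = 0 -> s0 *: a = 0. Proof. by case: hex => h _; apply: h. Qed.
Lemma E2 b : f' b = 0 -> exists a, f a = s0 *: b.
Proof. by case: hex => _ [[h _] _]; apply: h. Qed.
Lemma E3 a : f' (s0 *: f a) = 0. Proof. by case: hex => _ [[_ h] _]; apply: h. Qed.
Lemma E4 c : exists b, f' b = s0 *: c. Proof. by case: hex => _ [_ h]; apply: h. Qed.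
Lemma mulS s t : s \in S -> t \in S -> s * t \in S. Proof. by case: hS => _; apply. Qed.

Definition P1 := uS_pure S f f'.
Definition P2 := exists2 s, s \in S &
     forall (n m : nat) (a : 'I_n -> A) (r : 'I_n -> 'I_m -> R),
       (exists x : 'I_m -> B, forall i, f (a i) = \sum_(j < m) r i j *: x j) ->
       (exists y : 'I_m -> A, forall i, s *: a i = \sum_(j < m) r i j *: y j).
Definition P3 := exists2 s, s \in S &
     forall (F K : lmodType R) (i : {linear K -> F}),
       fg_free F -> fin_generated K -> injective i ->
       forall (alpha : {linear K -> A}) (beta : {linear F -> B}),
         (forall x, f (alpha x) = beta (i x)) ->
         exists eta : {linear F -> A}, forall x, s *: alpha x = eta (i x).
Definition P4 := exists2 s, s \in S &
     forall N : lmodType R, fin_presented N ->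
       (forall h : {linear N -> A}, (forall x, f (h x) = 0) ->
          forall x, s *: h x = 0) /\
       (forall g : {linear N -> B}, (forall x, f' (g x) = 0) ->
          exists h : {linear N -> A}, forall x, f (h x) = s *: g x) /\
       (forall (h : {linear N -> A}) x, f' (s *: f (h x)) = 0) /\
       (forall k : {linear N -> C}, exists g : {linear N -> B},
          forall x, f' (g x) = s *: k x).

Lemma p2p3 : P2 -> P3.
Proof.
case=> s2 s2S h2; exists s2 => // F K i [n [e [spF indF]]] [p [k_ spK]] _ alpha beta hab.
pose r q := projT1 (cid (spF (i (k_ q)))).
have hr q : i (k_ q) = \sum_(j < n) r q j *: e j := projT2 (cid (spF (i (k_ q)))).
have [y hy] : exists y : 'I_n -> A, forall q, s2 *: alpha (k_ q) = \sum_(j < n) r q j *: y j.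
  apply: (h2 p n (fun q => alpha (k_ q)) r); exists (fun j => beta (e j)) => q.
  by rewrite hab hr linear_sum; apply: eq_bigr => j _; rewrite linearZ.
have [eta heta] := fg_free_lift spF indF y.
exists eta => x; have [c ->] := spK x.
have -> : i (\sum_(q < p) c q *: k_ q) = \sum_(j < n) (\sum_(q < p) c q * r q j) *: e j.
  by rewrite linear_sum -sum_comb; apply: eq_bigr => q _; rewrite linearZ hr.
rewrite heta linear_sum scaler_sumr -sum_comb; apply: eq_bigr => q _.
by rewrite linearZ scalerA mulrC -scalerA hy.
Qed.


Lemma p3p2 : P3 -> P2.
Proof.
case=> s3 s3S h3; exists (s3 * s0); first exact: mulS.
move=> n m a r [x hx].
pose rho (i : 'I_n) : 'I_m -> R^o := fun j => r i j.
pose iota := combl rho.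
pose Ps (c : 'I_n -> R^o) := iota c = 0.
have P0 : Ps 0 by rewrite /Ps linear0.
have PD c c' : Ps c -> Ps c' -> Ps (c + c') by rewrite /Ps linearD => -> ->; rewrite addr0.
have PZ t c : Ps c -> Ps (t *: c) by rewrite /Ps linearZ_LR => ->; rewrite scaler0.
pose K := QM P0 PD PZ.
have [ib hib] := @qlift _ _ _ P0 PD PZ _ iota (fun c h => h).
have key c : Ps c -> forall j, \sum_(i < n) c i * r i j = 0.
  move=> h j; transitivity ((\sum_(i < n) c i *: rho i) j); last by have := h; rewrite /Ps /iota comblE => ->.
  by rewrite fsumE.
have hal0 : forall c, Ps c -> combl (fun i => s0 *: a i) c = 0.
  move=> c hc; rewrite comblE.
  have : f (\sum_(i < n) c i *: a i) = 0.
    rewrite linear_sum.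
    under eq_bigr do rewrite linearZ_LR hx scaler_sumr.
    rewrite exchange_big /= big1 // => j _.
    under eq_bigr do rewrite scalerA.
    by rewrite -scaler_suml key // scale0r.
  move/E1; rewrite scaler_sumr => h; rewrite -[RHS]h; apply: eq_bigr => i _.
  by rewrite !scalerA mulrC.
have [al hal] := @qlift _ _ _ P0 PD PZ _ (combl (fun i => s0 *: a i)) hal0.
pose be := combl (fun j => s0 *: x j).
have hinj : injective ib.
  move=> q q'; rewrite -[q](@qpi_surj _ _ _ P0 PD PZ) -[q'](@qpi_surj _ _ _ P0 PD PZ) !hib => e.
  apply/(qpi_eqE P0 PD PZ); rewrite /Ps linearB; apply/eqP; rewrite subr_eq0; apply/eqP; exact: e.
have hab q : f (al q) = be (ib q).
  have evr c j : (\sum_(i < n) c i *: rho i) j = \sum_(i < n) c i * r i j by rewrite fsumE.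
  rewrite -[q](@qpi_surj _ _ _ P0 PD PZ) hal hib /be !comblE linear_sum.
  under [RHS]eq_bigr do rewrite evr.
  rewrite -sum_comb; apply: eq_bigr => i _; rewrite linearZ_LR linearZ_LR hx.
  rewrite scaler_sumr; congr (_ *: _); apply: eq_bigr => j _.
  by rewrite !scalerA mulrC.
have fgF : fg_free ('I_m -> R^o).
  exists m, (fun j => delta R j); split; first by move=> phi; exists phi; exact: delta_span.
  exact: delta_indep.
have fgK : fin_generated K.
  exists n, (fun i => qpi P0 PD PZ (delta R i)) => q.
  exists (val q); rewrite -{1}[q](@qpi_surj _ _ _ P0 PD PZ) {1}(delta_span (val q)).
  by rewrite linear_sum; apply: eq_bigr => i _; rewrite linearZ_LR.
have [eta heta] := h3 _ _ ib fgF fgK hinj al be hab.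
exists (fun j => eta (delta R j)) => i0.
have := heta (qpi P0 PD PZ (delta R i0)); rewrite hal hib combl_delta.
rewrite scalerA => ->; rewrite /iota combl_delta {1}(delta_span (rho i0)) linear_sum.
by apply: eq_bigr => j _; rewrite linearZ_LR.
Qed.


Lemma fp_comb (N : lmodType R) n (gam : 'I_n -> N) (W : lmodType R) (h : {linear N -> W}) c :
  h (\sum_(i < n) c i *: gam i) = \sum_(i < n) c i *: h (gam i).
Proof. by rewrite linear_sum; apply: eq_bigr => i _; rewrite linearZ_LR. Qed.

Lemma p2p4 : P2 -> P4.
Proof.
case=> s2 s2S h2; exists (s0 * (s0 * (s0 * s2))); first by rewrite !mulS.
move=> N [n [gam [span [k [rel [relz relOK]]]]]].
have relz' (W : lmodType R) (h : {linear N -> W}) l :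
    \sum_(i < n) rel l i *: h (gam i) = 0.
  by rewrite -fp_comb relz linear0.
split; [|split; [|split]].
- by move=> h hf x; rewrite mulrC -scalerA (E1 (hf x)) scaler0.
- move=> g hg.
  have [av hav] : exists av : 'I_n -> A, forall i, f (av i) = s0 *: g (gam i).
    exists (fun i => projT1 (cid (E2 (hg (gam i))))) => i.
    exact: (projT2 (cid (E2 (hg (gam i))))).
  have hz : forall l, \sum_(i < n) rel l i *: (fun i => (s0 * s2) *: (s0 *: av i)) i = 0.
    move=> l /=.
    have e i : rel l i *: ((s0 * s2) *: (s0 *: av i)) = (s0 * s2 * s0) *: (rel l i *: av i).
      by rewrite !scalerA; congr (_ *: _); ring.
    under eq_bigr do rewrite e.
    rewrite -scaler_sumr.
    have : f (\sum_(i < n) rel l i *: av i) = 0.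
      rewrite fp_comb; under eq_bigr do rewrite hav scalerA mulrC -scalerA.
      by rewrite -scaler_sumr relz' scaler0.
    by move/E1 => h0; rewrite -scalerA h0 scaler0.
  have [h hh] := @fp_lift R N A n gam k rel span relOK _ hz.
  exists h => x; have [c ->] := span x.
  rewrite hh (fp_comb _ f) (fp_comb _ g) scaler_sumr; apply: eq_bigr => i _.
  rewrite (linearZ_LR f) (linearZ_LR f) hav !scalerA; congr (_ *: _); ring.
- by move=> h x; rewrite -scalerA -(linearZ_LR f); apply: E3.
- move=> kk.
  have [bv hbv] : exists bv : 'I_n -> B, forall i, f' (bv i) = s0 *: kk (gam i).
    exists (fun i => projT1 (cid (E4 (kk (gam i))))) => i.
    exact: (projT2 (cid (E4 (kk (gam i))))).
  have hr l : f' (\sum_(i < n) rel l i *: bv i) = 0.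
    rewrite fp_comb; under eq_bigr do rewrite hbv scalerA mulrC -scalerA.
    by rewrite -scaler_sumr relz' scaler0.
  pose al l := projT1 (cid (E2 (hr l))).
  have hal l : f (al l) = s0 *: \sum_(i < n) rel l i *: bv i := projT2 (cid (E2 (hr l))).
  have [y hy] : exists y : 'I_n -> A, forall l, s2 *: al l = \sum_(i < n) rel l i *: y i.
    apply: (h2 k n al rel); exists (fun i => s0 *: bv i) => l.
    by rewrite hal scaler_sumr; apply: eq_bigr => i _; rewrite !scalerA mulrC.
  have hz : forall l, \sum_(i < n) rel l i *: (fun i => s0 *: ((s2 * s0) *: bv i - f (y i))) i = 0.
    move=> l /=.
    have e i : rel l i *: (s0 *: ((s2 * s0) *: bv i - f (y i))) =
        (s0 * (s2 * s0)) *: (rel l i *: bv i) - s0 *: (rel l i *: f (y i)).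
      by rewrite !scalerBr; congr (_ - _); rewrite !scalerA; congr (_ *: _); ring.
    under eq_bigr do rewrite e.
    rewrite sumrB -!scaler_sumr -(fp_comb y f) -hy (linearZ_LR f) hal !scalerA.
    by apply/eqP; rewrite subr_eq0; apply/eqP; congr (_ *: _); ring.
  have [g hg] := @fp_lift R N B n gam k rel span relOK _ hz.
  exists g => x; have [c ->] := span x.
  rewrite hg (fp_comb _ f') (fp_comb _ kk) scaler_sumr; apply: eq_bigr => i _.
  rewrite !(linearZ_LR f') linearB /= !(linearZ_LR f') hbv scalerBr -(linearZ_LR f' s0 (f (y i))) E3 subr0 !scalerA.
  congr (_ *: _); ring.
Qed.


Lemma p4p2 : P4 -> P2.
Proof.
case=> s4 s4S h4; exists (s0 * (s0 * (s4 * s0))); first by rewrite !mulS.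
move=> n m a r [x hx].
pose rho (i : 'I_n) : 'I_m -> R^o := fun j => r i j.
pose Ps (c : 'I_m -> R^o) := exists d : 'I_n -> R, c = combl rho (d : 'I_n -> R^o).
have P0 : Ps 0 by exists (fun _ => 0); rewrite (linear0 (combl rho)).
have PD c c' : Ps c -> Ps c' -> Ps (c + c').
  by move=> [d ->] [d' ->]; exists ((d : 'I_n -> R^o) + d'); rewrite linearD.
have PZ t c : Ps c -> Ps (t *: c).
  by move=> [d ->]; exists (t *: (d : 'I_n -> R^o)); rewrite linearZ_LR.
pose N := QM P0 PD PZ.
pose pi := qpi P0 PD PZ.
pose gam (j : 'I_m) : QM P0 PD PZ := pi (delta R j).
pose vq (q : QM P0 PD PZ) : 'I_m -> R := fun j => val q j.
have spanN (q : QM P0 PD PZ) : q = \sum_(j < m) vq q j *: gam j.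
  rewrite -{1}[q](@qpi_surj _ _ _ P0 PD PZ) {1}(delta_span (val q)).
  by rewrite linear_sum; apply: eq_bigr => i _; rewrite linearZ_LR.
have gamc c : \sum_(j < m) c j *: gam j = pi c.
  by rewrite {2}(delta_span c) linear_sum; apply: eq_bigr => j _; rewrite linearZ_LR.
have relz l : \sum_(j < m) r l j *: gam j = 0.
  rewrite (gamc (rho l)); apply/(qpi_eq0 P0 PD PZ).
  by exists (delta R l); rewrite combl_delta.
have relOK (c : 'I_m -> R) : \sum_(j < m) c j *: gam j = 0 ->
    exists d : 'I_n -> R, forall j, c j = \sum_(l < n) d l * r l j.
  rewrite (gamc c) => /(qpi_eq0 P0 PD PZ) [d hd]; exists d => j.
  by rewrite hd comblE fsumE.
have fpN : fin_presented N.
  exists m, gam; split; first by move=> q; exists (vq q); exact: spanN.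
  by exists n, r; split.
have spN (q : N) : exists c : 'I_m -> R, q = \sum_(j < m) c j *: gam j.
  by exists (vq q); exact: spanN.
have hz : forall l, \sum_(j < m) r l j *: (fun j => f' (s0 *: x j)) j = 0.
  move=> l /=.
  have e j : r l j *: f' (s0 *: x j) = f' (s0 *: (r l j *: x j)).
    by rewrite !(linearZ_LR f') !scalerA mulrC.
  under eq_bigr do rewrite e.
  by rewrite -linear_sum -scaler_sumr -hx; apply: E3.
have [kk hkk] := @fp_lift R (QM P0 PD PZ) C m gam n r spN relOK _ hz.
have hk j : kk (gam j) = f' (s0 *: x j).
  by have := hkk (delta R j); rewrite !sum_deltaZ.
have [g hg] := (h4 _ fpN).2.2.2 kk.
have hker j : f' ((s4 * s0) *: x j - g (gam j)) = 0.
  by rewrite linearB /= hg hk !(linearZ_LR f') scalerA subrr.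
pose z j := projT1 (cid (E2 (hker j))).
have hzz j : f (z j) = s0 *: ((s4 * s0) *: x j - g (gam j)) := projT2 (cid (E2 (hker j))).
exists (fun j => s0 *: z j) => i.
have e1 : f (\sum_(j < m) r i j *: z j - (s0 * (s4 * s0)) *: a i) = 0.
  rewrite linearB linear_sum /= (linearZ_LR f) hx scaler_sumr.
  have e j : f (r i j *: z j) = (s0 * (s4 * s0)) *: (r i j *: x j) - s0 *: g (r i j *: gam j).
    rewrite (linearZ_LR f) hzz (linearZ_LR g) !scalerBr !scalerA; congr (_ *: _ - _ *: _); ring.
  under eq_bigr do rewrite e.
  rewrite sumrB -!scaler_sumr -(linear_sum g) relz linear0 scaler0 subr0.
  by rewrite scaler_sumr subrr.
have := E1 e1; rewrite scalerBr scalerA => /eqP; rewrite subr_eq0 => /eqP <-.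
by rewrite scaler_sumr; apply: eq_bigr => j _; rewrite !scalerA mulrC.
Qed.

End Main.

Lemma ifN (V : zmodType) (c : bool) (m : V) : (if c then - m else 0) = - (if c then m else 0).
Proof. by case: c; rewrite ?oppr0. Qed.
Lemma ifZ (R : pzRingType) (V : lmodType R) (c : bool) (v : V) :
  (if c then 1 else 0) *: v = if c then v else 0.
Proof. by case: c; rewrite ?scale1r ?scale0r. Qed.
Lemma ifZ' (R : pzRingType) (V : lmodType R) (c : bool) (a : R) (v : V) :
  (if c then a else 0) *: v = if c then a *: v else 0.
Proof. by case: c; rewrite ?scale0r. Qed.

Lemma sum_nthY (X : eqType) (V : nmodType) (Y : seq X) y0 (G : X -> V) y :
  uniq Y -> y \in Y ->
  \sum_(j < size Y) (if y == nth y0 Y j then G (nth y0 Y j) else 0) = G y.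
Proof.
move=> uY yY.
transitivity (\sum_(x <- Y) (if y == x then G x else 0)).
  by rewrite (big_nth y0) big_mkord.
rewrite (bigD1_seq y) //= eqxx big1 ?addr0 // => x /negbTE.
by rewrite eq_sym => ->.
Qed.

Lemma sum_seq_delta (X : eqType) (V : nmodType) (Y : seq X) (H : X -> V) x :
  uniq Y -> x \in Y -> \sum_(y <- Y) (if x == y then H y else 0) = H x.
Proof.
move=> uY xY; rewrite (bigD1_seq x) //= eqxx big1 ?addr0 // => y /negbTE.
by rewrite eq_sym => ->.
Qed.

Lemma regroup (T X : eqType) (V : nmodType) (Y : seq X) (t : seq T) (c : T -> X)
  (G : X -> T -> V) : uniq Y -> (forall p, p \in t -> c p \in Y) ->
  \sum_(p <- t) G (c p) p = \sum_(y <- Y) \sum_(p <- t) (if c p == y then G y p else 0).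
Proof.
move=> uY tY; rewrite exchange_big; apply: eq_big_seq => p pt.
by rewrite (sum_seq_delta (fun y => G y p)) //; apply: tY.
Qed.

Lemma big_nth_ord (T : Type) (V : nmodType) (u : seq T) x0 (G : T -> V) :
  \sum_(p <- u) G p = \sum_(k < size u) G (nth x0 u k).
Proof. by rewrite (big_nth x0) big_mkord. Qed.

Section KerInv.
Variables (R : comPzRingType) (M X : lmodType R).
Definition Phi (t : seq (M * X)) (b : X) : M :=
  \sum_(p <- t) (if p.2 == b then p.1 else 0).
Definition genf (q : M * seq (R * X)) (b : X) : M :=
  \sum_(w <- q.2) (if w.2 == b then w.1 *: q.1 else 0).
Definition okg (q : M * seq (R * X)) := \sum_(w <- q.2) w.1 *: w.2 = 0.
Definition KerX (h : X -> M) := exists l : seq (M * seq (R * X)),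
  (forall q, q \in l -> okg q) /\ forall b, h b = \sum_(q <- l) genf q b.

Lemma K0 : KerX (fun _ => 0).
Proof. by exists [::]; split => // b; rewrite big_nil. Qed.
Lemma Kext h h' : KerX h -> (forall b, h b = h' b) -> KerX h'.
Proof. by move=> [l [ok e]] e'; exists l; split => // b; rewrite -e'. Qed.
Lemma KD h h' : KerX h -> KerX h' -> KerX (fun b => h b + h' b).
Proof.
move=> [l [ok e]] [l' [ok' e']]; exists (l ++ l'); split.
  by move=> q; rewrite mem_cat => /orP [] ?; [apply: ok | apply: ok'].
by move=> b; rewrite big_cat e e'.
Qed.
Lemma KN h : KerX h -> KerX (fun b => - h b).
Proof.
move=> [l [ok e]]; exists (map (fun q => (- q.1, q.2)) l); split.
  by move=> q /mapP [q' /ok h1 ->]; exact: h1.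
move=> b; rewrite e big_map -sumrN; apply: eq_bigr => q _.
rewrite /genf /= -sumrN; apply: eq_bigr => w _.
by rewrite scalerN ifN.
Qed.
Lemma Kgen q : okg q -> KerX (genf q).
Proof.
move=> ok; exists [:: q]; split.
  by move=> q'; rewrite inE => /eqP ->.
by move=> b; rewrite big_seq1.
Qed.

Lemma Phi_cat t t' b : Phi (t ++ t') b = Phi t b + Phi t' b.
Proof. by rewrite /Phi big_cat. Qed.
Lemma Phi_nil b : Phi [::] b = 0. Proof. by rewrite /Phi big_nil. Qed.

Lemma te_Ker t t' : tens_eq t t' -> KerX (fun b => Phi t b - Phi t' b).
Proof.
elim=> {t t'}.
- by move=> t; apply: Kext K0 _ => b; rewrite subrr.
- move=> t t' _ h; apply: Kext (KN h) _ => b; by rewrite opprB.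
- move=> t1 t2 t3 _ h1 _ h2; apply: Kext (KD h1 h2) _ => b.
  by rewrite addrA subrK.
- move=> t1 t1' t2 t2' _ h1 _ h2; apply: Kext (KD h1 h2) _ => b.
  by rewrite !Phi_cat opprD addrACA.
- move=> t1 t2; apply: Kext K0 _ => b; by rewrite !Phi_cat [Phi t2 b + _]addrC subrr.
- move=> m m' a; apply: Kext K0 _ => b.
  apply/esym/eqP; rewrite subr_eq0.
  by rewrite /Phi !big_cons !big_nil /=; case: (a == b); rewrite ?addr0.
- move=> m a a'.
  have ok : okg (m, [:: (1, a + a'); (-1, a); (-1, a')]).
    by rewrite /okg !big_cons big_nil /= !scaleN1r scale1r addr0 -opprD subrr.
  apply: Kext (Kgen ok) _ => b.
  rewrite /Phi /genf !big_cons !big_nil /= scale1r !scaleN1r !ifN.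
  by rewrite !addr0 opprD.
- move=> r m a.
  have ok : okg (m, [:: (r, a); (-1, r *: a)]).
    by rewrite /okg !big_cons big_nil /= !scaleN1r addr0 subrr.
  apply: Kext (Kgen ok) _ => b.
  rewrite /Phi /genf !big_cons !big_nil /= !scaleN1r !ifN.
  by rewrite !addr0.
- move=> a; apply: Kext K0 _ => b.
  by rewrite /Phi !big_cons !big_nil /= if_same addr0 subr0.
Qed.
End KerInv.

Section Main2.
Variables (R : comPzRingType) (A B C : lmodType R) (f : {linear A -> B}) (f' : {linear B -> C})
  (s0 : R) (hex : short_uS_exact_wrt s0 f f').

Lemma T1core (s2 : R)
  (h2 : forall (n m : nat) (a : 'I_n -> A) (r : 'I_n -> 'I_m -> R),
       (exists x : 'I_m -> B, forall i, f (a i) = \sum_(j < m) r i j *: x j) ->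
       (exists y : 'I_m -> A, forall i, s2 *: a i = \sum_(j < m) r i j *: y j))
  (M : lmodType R) (u : seq (M * A)) :
  tens_eq (tens_map f u) [::] -> tens_eq (tens_scale s2 u) [::].
Proof.
move=> /te_Ker [l [okl hl]].
pose Y := undup ([seq f p.2 | p <- u] ++ flatten [seq [seq w.2 | w <- q.2] | q <- l]).
have uY : uniq Y := undup_uniq _.
have Yu p : p \in u -> f p.2 \in Y.
  by move=> pu; rewrite mem_undup mem_cat (map_f (fun p => f p.2) pu).
have Yl q w : q \in l -> w \in q.2 -> w.2 \in Y.
  move=> ql wq; rewrite mem_undup mem_cat; apply/orP; right.
  apply/flattenP; exists [seq w.2 | w <- q.2]; first exact: map_f.
  exact: map_f.
pose nu := size u; pose nl := size l.
pose mu (k : 'I_nu) := nth (0, 0) u k.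
pose lq (q : 'I_nl) := nth (0, [::]) l q.
pose aa (i : 'I_(nu + nl)) : A := match fintype.split i with inl k => (mu k).2 | inr _ => 0 end.
pose rr (i : 'I_(nu + nl)) (j : 'I_(size Y)) : R := match fintype.split i with
  | inl k => if f (mu k).2 == nth 0 Y j then 1 else 0
  | inr q => \sum_(w <- (lq q).2) (if w.2 == nth 0 Y j then w.1 else 0) end.
have hrow_l k : \sum_(j < size Y) rr (lshift nl k) j *: nth 0 Y j = f (mu k).2.
  rewrite /rr (unsplitK (inl _ k) : fintype.split (lshift nl k) = inl k).
  under eq_bigr do rewrite ifZ.
  by rewrite (sum_nthY 0 id) //; apply: Yu; apply: mem_nth.
have hrow_r q : \sum_(j < size Y) rr (rshift nu q) j *: nth 0 Y j = 0.
  rewrite /rr (unsplitK (inr _ q) : fintype.split (rshift nu q) = inr q).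
  under eq_bigr do rewrite scaler_suml.
  rewrite exchange_big /=.
  transitivity (\sum_(w <- (lq q).2) w.1 *: w.2); last by apply: okl; apply: mem_nth.
  apply: eq_big_seq => w wq.
  under eq_bigr do rewrite ifZ'.
  by rewrite (sum_nthY 0 (fun x => w.1 *: x)) //; apply: (Yl (lq q)) => //; apply: mem_nth.
have [z hz] : exists z : 'I_(size Y) -> A, forall i, s2 *: aa i = \sum_(j < size Y) rr i j *: z j.
  apply: h2; exists (fun j => nth 0 Y j) => i.
  case: (split_ordP i) => [k ->|q ->].
    by rewrite hrow_l /aa (unsplitK (inl _ k) : fintype.split (lshift nl k) = inl k).
  by rewrite hrow_r /aa (unsplitK (inr _ q) : fintype.split (rshift nu q) = inr q) linear0.
apply/te_tmk; rewrite tmk_sum tmk_nil big_map /= (big_nth_ord _ (0,0)).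
have e k : tq (s2 *: (mu k).1) (mu k).2 =
    \sum_(j < size Y) (if f (mu k).2 == nth 0 Y j then tq (mu k).1 (z j) else 0).
  rewrite tqZ; have := hz (lshift nl k).
  rewrite /aa /rr (unsplitK (inl _ k) : fintype.split (lshift nl k) = inl k) => ->.
  by rewrite tq_sumr; apply: eq_bigr => j _; rewrite ifZ; case: ifP => _; rewrite ?tq0r.
under eq_bigr do rewrite e.
rewrite exchange_big /=.
have e2 (j : 'I_(size Y)) : \sum_(k < nu) (if f (mu k).2 == nth 0 Y j then tq (mu k).1 (z j) else 0) =
    tq (Phi (tens_map f u) (nth 0 Y j)) (z j).
  rewrite /Phi big_map tq_suml (big_nth_ord _ (0,0)); apply: eq_bigr => k _ /=.
  by case: ifP => _; rewrite ?tq0l.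
under eq_bigr do rewrite e2.
have hl' b : Phi (tens_map f u) b = \sum_(q <- l) genf q b.
  by have := hl b; rewrite Phi_nil subr0.
under eq_bigr do rewrite hl' tq_suml (big_nth_ord _ (0, [::])).
rewrite exchange_big /= big1 // => q _.
have := hz (rshift nu q).
rewrite /aa /rr (unsplitK (inr _ q) : fintype.split (rshift nu q) = inr q) scaler0 => h0.
transitivity (tq (lq q).1 (\sum_(j < size Y)
   (\sum_(w <- (lq q).2) (if w.2 == nth 0 Y j then w.1 else 0)) *: z j)); last first.
  by rewrite -h0 tq0r.
rewrite tq_sumr; apply: eq_bigr => j _; rewrite /genf tq_suml scaler_suml tq_sumr.
apply: eq_bigr => w _; rewrite ifZ'.
by case: ifP => _; rewrite ?tq0l ?tq0r ?tqZ.
Qed.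

Lemma T2core (M : lmodType R) (t : seq (M * B)) :
  tens_eq (tens_map f' t) [::] ->
  exists u : seq (M * A), tens_eq (tens_map f u) (tens_scale (s0 * s0) t).
Proof.
move=> /te_Ker [l [okl hl]].
pose bp (c : C) : B := projT1 (cid (E4 hex c)).
have hbp c : f' (bp c) = s0 *: c := projT2 (cid (E4 hex c)).
have ha b : f' (s0 *: b - bp (f' b)) = 0.
  by rewrite linearB /= (linearZ_LR f') hbp subrr.
pose al b := projT1 (cid (E2 hex (ha b))).
have hal b : f (al b) = s0 *: (s0 *: b - bp (f' b)) := projT2 (cid (E2 hex (ha b))).
have hb q : q \in l -> f' (\sum_(w <- q.2) w.1 *: bp w.2) = 0.
  move=> ql; rewrite linear_sum /=.
  under eq_bigr do rewrite (linearZ_LR f') hbp scalerA mulrC -scalerA.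
  by rewrite -scaler_sumr okl // scaler0.
pose be q := match pselect (q \in l) with
  | left h => projT1 (cid (E2 hex (hb q h))) | right _ => 0 end.
have hbe q : q \in l -> f (be q) = s0 *: \sum_(w <- q.2) w.1 *: bp w.2.
  by rewrite /be => ql; case: pselect => // h; exact: (projT2 (cid (E2 hex (hb q h)))).
pose Y := undup ([seq f' p.2 | p <- t] ++ flatten [seq [seq w.2 | w <- q.2] | q <- l]).
have uY : uniq Y := undup_uniq _.
have Yt p : p \in t -> f' p.2 \in Y.
  by move=> pu; rewrite mem_undup mem_cat (map_f (fun p => f' p.2) pu).
have Yl q w : q \in l -> w \in q.2 -> w.2 \in Y.
  move=> ql wq; rewrite mem_undup mem_cat; apply/orP; right.
  apply/flattenP; exists [seq w.2 | w <- q.2]; first exact: map_f.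
  exact: map_f.
have key : \sum_(p <- t) tq p.1 (s0 *: bp (f' p.2)) =
           \sum_(q <- l) tq q.1 (s0 *: \sum_(w <- q.2) w.1 *: bp w.2).
  rewrite (regroup (fun y p => tq p.1 (s0 *: bp y)) uY Yt).
  have hl' y : Phi (tens_map f' t) y = \sum_(q <- l) genf q y.
    by have := hl y; rewrite Phi_nil subr0.
  transitivity (\sum_(y <- Y) tq (\sum_(q <- l) genf q y) (s0 *: bp y)).
    apply: eq_bigr => y _; rewrite -hl' /Phi big_map tq_suml; apply: eq_bigr => p _ /=.
    by case: ifP => _; rewrite ?tq0l.
  under eq_bigr do rewrite tq_suml.
  rewrite exchange_big /=; apply: eq_big_seq => q ql.
  rewrite /genf; under eq_bigr do rewrite tq_suml.
  rewrite exchange_big /= scaler_sumr tq_sumr; apply: eq_big_seq => w wq.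
  transitivity (\sum_(y <- Y) (if w.2 == y then tq (w.1 *: q.1) (s0 *: bp y) else 0)).
    by apply: eq_bigr => y _; case: ifP => _; rewrite ?tq0l.
  rewrite (sum_seq_delta (fun y => tq (w.1 *: q.1) (s0 *: bp y))) //; last exact: Yl ql wq.
  by rewrite tqZ !scalerA mulrC.
exists ([seq (p.1, al p.2) | p <- t] ++ [seq (q.1, be q) | q <- l]).
apply/te_tmk; rewrite /tens_map map_cat tmk_catD !tmk_sum !big_map /=.
transitivity (\sum_(p <- t) tq p.1 ((s0 * s0) *: p.2) - \sum_(p <- t) tq p.1 (s0 *: bp (f' p.2))
   + \sum_(q <- l) tq q.1 (s0 *: \sum_(w <- q.2) w.1 *: bp w.2)).
  congr (_ + _); last by apply: eq_big_seq => q ql; rewrite hbe.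
  rewrite -sumrB; apply: eq_bigr => p _; rewrite hal -tqBr scalerBr scalerA //.
rewrite key subrK; apply: eq_bigr => p _; by rewrite tqZ.
Qed.
End Main2.

Lemma tens_scale_comp (R : comPzRingType) (M A : lmodType R) a b (t : seq (M * A)) :
  tens_scale a (tens_scale b t) = tens_scale (a * b) t.
Proof. by rewrite /tens_scale -map_comp; apply: eq_map => p /=; rewrite scalerA. Qed.
Lemma tens_map_scale (R : comPzRingType) (M A B : lmodType R) (g : A -> B) a (t : seq (M * A)) :
  tens_map g (tens_scale a t) = tens_scale a (tens_map g t).
Proof. by rewrite /tens_map /tens_scale -!map_comp. Qed.

Section Main3.
Variables (R : comPzRingType) (S : {pred R}) (hS : mult_subset S)
  (A B C : lmodType R) (f : {linear A -> B}) (f' : {linear B -> C})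
  (s0 : R) (s0S : s0 \in S) (hex : short_uS_exact_wrt s0 f f').

Lemma p2p1 : P2 S f -> P1 S f f'.
Proof.
case=> s2 s2S h2 M; exists (s2 * (s0 * s0)); first by rewrite !(mulS hS).
split; [|split; [|split]].
- move=> u /(T1core h2) h; have := tens_scale_te (s0 * s0) h.
  by rewrite tens_scale_comp mulrC.
- move=> t /(T2core hex) [u hu]; exists (tens_scale s2 u).
  rewrite tens_map_scale; apply: te_t (tens_scale_te s2 hu) _.
  by rewrite tens_scale_comp; exact: te_r.
- move=> u; apply/te_tmk; rewrite tmk_sum tmk_nil /tens_map /tens_scale !big_map /=.
  apply: big1 => p _.
  by rewrite tqZ -(linearZ_LR f') mulrA -scalerA (linearZ_LR f') (E3 hex) scaler0 tq0r.
- move=> w.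
  pose bp (c : C) : B := projT1 (cid (E4 hex c)).
  have hbp c : f' (bp c) = s0 *: c := projT2 (cid (E4 hex c)).
  exists [seq ((s2 * s0) *: p.1, bp p.2) | p <- w].
  apply/te_tmk; rewrite !tmk_sum /tens_map /tens_scale !big_map /=.
  apply: eq_bigr => p _; rewrite hbp -tqZ scalerA; congr (tq (_ *: _) _); ring.
Qed.
End Main3.

Lemma ord_delta (V : nmodType) n (F : 'I_n -> V) (k : nat) :
  \sum_(i < n) (if k == val i then F i else 0) = if insub k is Some i then F i else 0.
Proof.
case: insubP => [i0 _ <-|hk].
  rewrite (bigD1 i0) //= eqxx big1 ?addr0 // => i /negbTE.
  by rewrite (inj_eq val_inj) eq_sym => ->.
apply: big1 => i _; case: eqP => // e; by move: hk; rewrite e ltn_ord.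
Qed.

Lemma scaleo (R : pzRingType) (a b : R) : a *: (b : R^o) = a * b. Proof. by []. Qed.

Section P1P2.
Variables (R : comPzRingType) (A : lmodType R).

Definition Sig := nat -> nat -> R.
Definition Xt := (Sig * nat)%type.
Definition Ft := Xt -> R^o.
Definition ee (x : Xt) : Ft := fun y => if x == y then 1 else 0.
Definition rho (g : Sig * nat) : Ft := fun y => if g.1 == y.1 then g.1 y.2 g.2 else 0.
Definition PS (phi : Ft) := exists l : seq ((Sig * nat) * R), phi = \sum_(q <- l) q.2 *: rho q.1.
Lemma PS0 : PS 0. Proof. by exists [::]; rewrite big_nil. Qed.
Lemma PSD x y : PS x -> PS y -> PS (x + y).
Proof. by move=> [l ->] [l' ->]; exists (l ++ l'); rewrite big_cat. Qed.
Lemma PSZ t x : PS x -> PS (t *: x).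
Proof.
move=> [l ->]; exists (map (fun q => (q.1, t * q.2)) l).
by rewrite big_map scaler_sumr; apply: eq_bigr => q _; rewrite scalerA.
Qed.
Lemma PS_rho g : PS (rho g).
Proof. by exists [:: (g, 1)]; rewrite big_seq1 scale1r. Qed.

Definition MM := QM PS0 PSD PSZ.
Definition piM := qpi PS0 PSD PSZ.

Definition RelA (h : Xt -> A) := exists l : seq ((Sig * nat) * A),
  forall x, h x = \sum_(q <- l) rho q.1 x *: q.2.
Lemma RA0 : RelA (fun _ => 0). Proof. by exists [::] => x; rewrite big_nil. Qed.
Lemma RAext h h' : RelA h -> (forall x, h x = h' x) -> RelA h'.
Proof. by move=> [l e] e'; exists l => x; rewrite -e'. Qed.
Lemma RAD h h' : RelA h -> RelA h' -> RelA (fun x => h x + h' x).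
Proof. by move=> [l e] [l' e']; exists (l ++ l') => x; rewrite big_cat e e'. Qed.
Lemma RAN h : RelA h -> RelA (fun x => - h x).
Proof.
move=> [l e]; exists (map (fun q => (q.1, - q.2)) l) => x.
by rewrite e big_map -sumrN; apply: eq_bigr => q _; rewrite scalerN.
Qed.
Lemma RAPS phi a : PS phi -> RelA (fun x => phi x *: a).
Proof.
move=> [l ->]; exists (map (fun q => (q.1, q.2 *: a)) l) => x.
rewrite fsumE scaler_suml big_map; apply: eq_bigr => q _.
by rewrite fscaleE scalerA; congr (_ *: _); exact: mulrC.
Qed.
Lemma RAsum I (r : seq I) (G : I -> Xt -> A) :
  (forall i, RelA (G i)) -> RelA (fun x => \sum_(i <- r) G i x).
Proof.
move=> hG; elim: r => [|i r IH].
  by apply: RAext RA0 _ => x; rewrite big_nil.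
by apply: RAext (RAD (hG i) IH) _ => x; rewrite big_cons.
Qed.

Definition Psi (t : seq (MM * A)) (x : Xt) : A := \sum_(p <- t) val p.1 x *: p.2.
Lemma Psi_cat t t' x : Psi (t ++ t') x = Psi t x + Psi t' x.
Proof. by rewrite /Psi big_cat. Qed.

Lemma te_RA t t' : tens_eq t t' -> RelA (fun x => Psi t x - Psi t' x).
Proof.
elim=> {t t'}.
- by move=> t; apply: RAext RA0 _ => x; rewrite subrr.
- move=> t t' _ h; apply: RAext (RAN h) _ => x; by rewrite opprB.
- move=> t1 t2 t3 _ h1 _ h2; apply: RAext (RAD h1 h2) _ => x.
  by rewrite addrA subrK.
- move=> t1 t1' t2 t2' _ h1 _ h2; apply: RAext (RAD h1 h2) _ => x.
  by rewrite !Psi_cat opprD addrACA.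
- move=> t1 t2; apply: RAext RA0 _ => x; by rewrite !Psi_cat [Psi t2 x + _]addrC subrr.
- move=> m m' a.
  have hP : PS (val m + val m' - val (m + m')) := val_qmk PS0 PSD PSZ (val m + val m').
  apply: RAext (RAN (RAPS a hP)) _ => x.
  rewrite /Psi !big_cons !big_nil /= !addr0 faddE foppE faddE.
  by rewrite !scalerDl !scaleNr opprD opprK addrC opprD.
- move=> m a a'; apply: RAext RA0 _ => x.
  by rewrite /Psi !big_cons !big_nil /= !addr0 scalerDr subrr.
- move=> r m a.
  have hP : PS (r *: val m - val (r *: m)) := val_qmk PS0 PSD PSZ (r *: val m).
  apply: RAext (RAN (RAPS a hP)) _ => x.
  rewrite /Psi !big_cons !big_nil /= !addr0 faddE foppE fscaleE.
  rewrite scalerDl scaleNr opprD opprK addrC.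
  by rewrite [in RHS]scalerA; congr (_ - _ *: _); exact: mulrC.
- move=> a.
  have hP : PS (0 - val (0 : MM)) := val_qmk PS0 PSD PSZ 0.
  apply: RAext (RAN (RAPS a hP)) _ => x.
  by rewrite /Psi !big_cons !big_nil /= !addr0 subr0 faddE foppE f0E add0r scaleNr opprK.
Qed.
End P1P2.

Section Main4.
Variables (R : comPzRingType) (S : {pred R}) (hS : mult_subset S)
  (A B C : lmodType R) (f : {linear A -> B}) (f' : {linear B -> C})
  (s0 : R) (s0S : s0 \in S) (hex : short_uS_exact_wrt s0 f f').

Lemma p1p2 : P1 S f f' -> P2 S f.
Proof.
move=> h1; have [s1 s1S [ex1 _]] := h1 (MM R).
exists s1 => // n m a r [x hx].
pose sig : Sig R := fun i j => if (insub i : option 'I_n) is Some i'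
   then (if (insub j : option 'I_m) is Some j' then r i' j' else 0) else 0.
have sigE (i : 'I_n) (j : 'I_m) : sig i j = r i j by rewrite /sig !valK.
pose pi := piM R.
pose u := [seq (pi (ee (sig, val i)), a i) | i <- index_enum 'I_n].
have rhoE (j : 'I_m) : \sum_(i < n) r i j *: ee (sig, val i) = rho (sig, val j).
  apply: funext => -[s' i']; rewrite fsumE /rho /=.
  case: (sig =P s') => [<-|ne].
    transitivity (\sum_(i < n) (if i' == val i then r i j else 0)).
      apply: eq_bigr => i _; rewrite fscaleE /ee xpair_eqE eqxx /= eq_sym.
      by case: (i' == val i); rewrite /GRing.scale /= ?mulr1 ?mulr0.
    by rewrite ord_delta /sig; case: insubP => // i0 _ _; rewrite valK.
  apply: big1 => i _; rewrite fscaleE /ee xpair_eqE.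
  by case: eqP => //= _; rewrite /GRing.scale /= mulr0.
have hu : tens_eq (tens_map f u) [::].
  apply/te_tmk; rewrite tmk_sum tmk_nil /tens_map !big_map /=.
  under eq_bigr do rewrite hx tq_sumr.
  rewrite exchange_big /=; apply: big1 => j _.
  under eq_bigr do rewrite -tqZ.
  rewrite -tq_suml.
  have -> : \sum_(i < n) r i j *: pi (ee (sig, val i)) = pi (rho (sig, val j)).
    rewrite -rhoE linear_sum; apply: eq_bigr => i _; by rewrite linearZ_LR.
  have -> : pi (rho (sig, val j)) = 0 by apply/(qpi_eq0 (PS0 R) (@PSD R) (@PSZ R)); exact: PS_rho.
  exact: tq0l.
have := te_RA (ex1 u hu) => hR.
pose h0 (z : Xt R) : A := \sum_(i < n) (s1 *: ee (sig, val i)) z *: a i.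
have hS' : RelA (fun z => \sum_(i <- index_enum 'I_n)
     (s1 *: ee (sig, val i) - val (pi (s1 *: ee (sig, val i)))) z *: a i).
  apply: RAsum => i; apply: RAPS; exact: (val_qmk (PS0 R) (@PSD R) (@PSZ R)).
have [l hl] : RelA h0.
  apply: RAext (RAD hR hS') _.
  move=> z; rewrite /Psi /u /tens_scale !big_map big_nil subr0 -big_split.
  apply: eq_bigr => i _.
  have -> : s1 *: pi (ee (sig, val i)) = pi (s1 *: ee (sig, val i)) by rewrite linearZ_LR.
  by rewrite /= faddE foppE scalerDl scaleNr addrCA subrr addr0.
exists (fun j => \sum_(q <- l) (if q.1 == (sig, val j) then q.2 else 0)) => i0.
have := hl (sig, val i0).
have -> : h0 (sig, val i0) = s1 *: a i0.
  rewrite /h0 -(sum_delta' (fun i => s1 *: a i) i0); apply: eq_bigr => i _.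
  rewrite fscaleE /ee xpair_eqE eqxx /= (inj_eq val_inj).
  rewrite [i0 == i]eq_sym; case: (i == i0); rewrite scaleo ?mulr1 ?mulr0 ?scale0r //.
move=> ->.
under [RHS]eq_bigr do rewrite scaler_sumr.
rewrite [RHS]exchange_big /=; apply: eq_bigr => -[[s' k] c] _ /=.
rewrite /rho /=; case: (s' =P sig) => [->|ne].
  transitivity (\sum_(j < m) (if k == val j then r i0 j *: c else 0)); last first.
    apply: eq_bigr => j _; rewrite xpair_eqE eqxx /=.
    by case: (k == val j); rewrite ?scaler0.
  rewrite ord_delta /sig valK.
  by case: (insub k) => [j|]; rewrite ?scale0r.
rewrite scale0r; apply/esym/big1 => j _; rewrite xpair_eqE.
by case: eqP => //= _; rewrite scaler0.
Qed.
End Main4.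

Theorem theorem2p2 (R : comPzRingType) (S : {pred R}) (hS : mult_subset S)
  (A B C : lmodType R) (f : {linear A -> B}) (f' : {linear B -> C})
  (hex : exists2 s, s \in S & short_uS_exact_wrt s f f') :
  [<->
   (* (1) *)
   uS_pure S f f';
   (* (2) *)
   exists2 s, s \in S &
     forall (n m : nat) (a : 'I_n -> A) (r : 'I_n -> 'I_m -> R),
       (exists x : 'I_m -> B, forall i, f (a i) = \sum_(j < m) r i j *: x j) ->
       (exists y : 'I_m -> A, forall i, s *: a i = \sum_(j < m) r i j *: y j);
   (* (3) *)
   exists2 s, s \in S &
     forall (F K : lmodType R) (i : {linear K -> F}),
       fg_free F -> fin_generated K -> injective i ->
       forall (alpha : {linear K -> A}) (beta : {linear F -> B}),
         (forall x, f (alpha x) = beta (i x)) ->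
         exists eta : {linear F -> A}, forall x, s *: alpha x = eta (i x);
   (* (4) *)
   exists2 s, s \in S &
     forall N : lmodType R, fin_presented N ->
       (* exactness at Hom(N,A) *)
       (forall h : {linear N -> A}, (forall x, f (h x) = 0) ->
          forall x, s *: h x = 0) /\
       (* exactness at Hom(N,B) *)
       (forall g : {linear N -> B}, (forall x, f' (g x) = 0) ->
          exists h : {linear N -> A}, forall x, f (h x) = s *: g x) /\
       (forall (h : {linear N -> A}) x, f' (s *: f (h x)) = 0) /\
       (* exactness at Hom(N,C) *)
       (forall k : {linear N -> C}, exists g : {linear N -> B},
          forall x, f' (g x) = s *: k x)].
Proof.
case: hex => s0 s0S hex0.
tfae.
- exact: p1p2.
- exact: (p2p3 (S := S) (f := f)).
- by move=> h3; apply: (p2p4 hS s0S hex0); exact: (p3p2 hS s0S hex0 h3).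
- by move=> h4; apply: (p2p1 hS s0S hex0); exact: (p4p2 hS s0S hex0 h4).
Qed.
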